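(* Let $A$ be a ring, $W$ a multiplicative subset of $A$, $M$ a left $A$-module, $S \subseteq M$, and $T \subseteq A$. Then $[T]^W_A S \subseteq [TS]^W_M$. Moreover, if $T$ is contained in the center $Z(A)$ of $A$, then $[T]^W_A [S]^W_M \subseteq [TS]^W_M$.
   Context: Rings are unital, not necessarily commutative. For $T\subseteq A$ and a left $A$-module $N$, a $T$-factroid of $N$ is an additive subgroup $F$ of $N$ such that for all $x\in N$ and $t\in T$, $tx\in F$ implies $x\in F$; for $S\subseteq N$, $[S]^T_N$ is the smallest $T$-factroid of $N$ containing $S$ ($A$ itself is viewed as a left $A$-module). For subsets $X\subseteq A$, $Y\subseteq M$, $XY=\{xy\mid x\in X, y\in Y\}$. *)

(* Defs.v *)
From HB Require Import structures.
From mathcomp Require Import all_boot all_algebra.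
Set Implicit Arguments. Unset Strict Implicit. Unset Printing Implicit Defensive.
Import GRing.Theory.
Local Open Scope ring_scope.

Definition multiplicative_subset (A : pzRingType) (W : A -> Prop) : Prop :=
  W 1 /\ forall a b, W a -> W b -> W (a * b).

Definition factroid (A : pzRingType) (N : lmodType A) (T : A -> Prop)
  (F : N -> Prop) : Prop :=
  [/\ F 0, (forall x y, F x -> F y -> F (x - y))
    & (forall (t : A) (x : N), T t -> F (t *: x) -> F x)].

(* [S]^T_N : the smallest T-factroid of N containing S
   (intersection of all T-factroids containing S). *)
Definition factroid_gen (A : pzRingType) (N : lmodType A) (T : A -> Prop)
  (S : N -> Prop) : N -> Prop :=
  fun x => forall F : N -> Prop, factroid T F -> (forall s, S s -> F s) -> F x.

Definition setmul (A : pzRingType) (N : lmodType A) (X : A -> Prop)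
  (Y : N -> Prop) : N -> Prop :=
  fun m => exists x y, [/\ X x, Y y & m = x *: y].

Definition center (A : pzRingType) : A -> Prop :=
  fun z => forall a : A, z * a = a * z.

(* Main.v *)
Require Import Defs.
From HB Require Import structures.
From mathcomp Require Import all_boot all_algebra.
Local Open Scope ring_scope.
Import GRing.Theory.

Lemma key (A : pzRingType) (W : A -> Prop) (M : lmodType A) (T : A -> Prop)
  (F : M -> Prop) (x : M) (a : A) :
  factroid W F -> (forall t, T t -> F (t *: x)) ->
  factroid_gen (N := A^o) W T a -> F (a *: x).
Proof.
move=> [F0 FB FW] HT Ha.
apply: (Ha (fun b : A^o => F ((b : A) *: x))) => //.
split.
- by rewrite scale0r.
- by move=> b c Hb Hc; rewrite scalerBl; apply: FB.
- move=> t b Wt Hb; apply: (FW t) => //.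
  by rewrite scalerA.
Qed.

Theorem proposition5p7 (A : pzRingType) (W : A -> Prop) (M : lmodType A)
  (S : M -> Prop) (T : A -> Prop) :
  multiplicative_subset W ->
  (forall m, setmul (A := A) (factroid_gen (N := A^o) W T) S m ->
             factroid_gen W (setmul T S) m) /\
  ((forall t, T t -> center t) ->
   forall m, setmul (A := A) (factroid_gen (N := A^o) W T) (factroid_gen W S) m ->
             factroid_gen W (setmul T S) m).
Proof.
move=> _; split.
- move=> m [a [s [Ha Hs ->]]] F HF HTS.
  apply: (@key _ _ _ _ _ _ _ HF _ Ha) => t Tt; apply: HTS; by exists t, s.
- move=> Hc m [a [x [Ha Hx ->]]] F HF HTS.
  apply: (@key _ _ _ _ _ _ _ HF _ Ha) => t Tt.
  have [F0 FB FW] := HF.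
  apply: (Hx (fun y => F (t *: y))) => //; last first.
    by move=> s Hs; apply: HTS; by exists t, s.
  split.
  + by rewrite scaler0.
  + by move=> y z Hy Hz; rewrite scalerBr; apply: FB.
  + move=> w y Ww Hy; apply: (FW w) => //.
    by rewrite scalerA -Hc // -scalerA.
Qed.
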